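(* Let $G$ be an outside option CDF on $[0,1]$ with mean $\xi\in(0,1)$, full support, and a log-concave density $g$, known to the seller. For $s\in[0,\xi)$ let $a(s)$ solve $\int_{a}^1(v-a)\,dG(v)=s$, let $p_h$ be the unique solution of $p=G(1-p)/g(1-p)$, and let $p^o(s)$ be the optimal price, namely $p^o(s)=1-a(s)$ if $1-a(s)\ge p_hG(1-p_h)$ and $p^o(s)=p_h$ otherwise. Then there exists $\hat s_G\in(0,\xi)$ such that $p^o(s)=p_h$ for every $s<\hat s_G$ and $p^o(s)=1-a(s)$ for every $s\ge\hat s_G$; moreover, at $s=\hat s_G$ the optimal price drops from $p_h$ to $1-a(\hat s_G)$, i.e., $1-a(\hat s_G)<p_h$.
   Context: Setting: a seller with a product of binary match value ($\mathbb P(x=1)=\mu\in(0,1)$) chooses a price $p\in[0,1]$ and a distribution $H$ on $[0,1]$ of the buyer's posterior with mean $\mu$, to maximize revenue $p\int_0^1[1-H(p+\min\{a,v\})]\,dG(v)$ for the known outside option CDF $G$, where $s\in[0,\xi)$ is the buyer's search cost. With full information (which is optimal in this setting), the optimal price is $p^o(s)$ as given in the claim. *)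

(* Defs.v *)
From Stdlib Require Import Reals Lra.
From Coquelicot Require Import Coquelicot.
Open Scope R_scope.

Definition log_concave_on01 (g : R -> R) : Prop :=
  forall x y t, 0 < x < 1 -> 0 < y < 1 -> 0 <= t <= 1 ->
    t * ln (g x) + (1 - t) * ln (g y) <= ln (g (t * x + (1 - t) * y)).

Definition outside_option_density (g : R -> R) : Prop :=
  (forall x, 0 <= x <= 1 -> 0 <= g x) /\
  (forall x, 0 < x < 1 -> 0 < g x) /\
  ex_RInt g 0 1 /\
  RInt g 0 1 = 1 /\
  log_concave_on01 g.

Definition cdf (g : R -> R) (x : R) : R := RInt g 0 x.

Definition mean (g : R -> R) : R := RInt (fun v => v * g v) 0 1.

Definition solves_a (g : R -> R) (s a : R) : Prop :=
  0 <= a <= 1 /\ RInt (fun v => (v - a) * g v) a 1 = s.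

(* p_h solves p = G(1-p)/g(1-p) (with g(1-p) > 0 so the quotient is genuine) *)
Definition solves_ph (g : R -> R) (p : R) : Prop :=
  0 <= p <= 1 /\ 0 < g (1 - p) /\ p = cdf g (1 - p) / g (1 - p).

Definition p_opt (g : R -> R) (ph : R) (a : R -> R) (s : R) : R :=
  if Rle_dec (ph * cdf g (1 - ph)) (1 - a s) then 1 - a s else ph.

(* Main.v *)
From Stdlib Require Import Reals Lra Lia ZArith.
From Coquelicot Require Import Coquelicot.
Require Import Defs.
Open Scope R_scope.

Definition sN (n:nat) (v:R) : R := IZR (Int_part (INR (S n) * v)) / INR (S n).
Definition fap (g : R -> R) n v := if Rle_dec 0 v then if Rle_dec v 1 then sN n v * g v else 0 else 0.
Definition klim (g : R -> R) v := if Rle_dec 0 v then if Rle_dec v 1 then v * g v else 0 else 0.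

Lemma Int_part_eq r (k:nat) : INR k < r < INR k + 1 -> Int_part r = Z.of_nat k.
Proof.
  intros H. unfold Int_part. destruct (archimed r) as [H1 H2].
  rewrite INR_IZR_INZ in H.
  assert (A : (Z.of_nat k < up r)%Z) by (apply lt_IZR; lra).
  assert (B : (up r < Z.of_nat k + 2)%Z) by (apply lt_IZR; rewrite plus_IZR; simpl; lra).
  lia.
Qed.

Lemma ex_fap (g : R -> R) : ex_RInt g 0 1 -> forall n, ex_RInt (fap g n) 0 1.
Proof.
  intros Hg n.
  assert (HN : 0 < INR (S n)) by (apply lt_0_INR; lia).
  set (N := INR (S n)) in *.
  assert (Hk : forall k, (k <= S n)%nat -> ex_RInt (fap g n) 0 (INR k / N)).
  { induction k as [|k IH]; intros Hle.
    - simpl. unfold Rdiv. rewrite Rmult_0_l. apply ex_RInt_point.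
    - assert (Hkn : INR (S k) <= N) by (apply le_INR; lia).
      assert (Hk0 : 0 <= INR k) by apply pos_INR.
      rewrite S_INR in Hkn |- *.
      assert (E1 : 0 <= INR k / N) by (apply Rdiv_le_0_compat; lra).
      assert (E2 : INR k / N <= (INR k + 1) / N) by (apply Rmult_le_compat_r; [left; apply Rinv_0_lt_compat; lra| lra]).
      assert (E3 : (INR k + 1) / N <= 1) by (apply (Rmult_le_reg_r N); [lra|]; unfold Rdiv; rewrite Rmult_assoc, Rinv_l by lra; lra).
      apply (ex_RInt_Chasles_0 _ 0 (INR k / N)); [lra| apply IH; lia |].
      apply (ex_RInt_ext (fun v => scal (INR k / N) (g v))).
      + rewrite Rmin_left, Rmax_right by lra. intros x Hx.
        unfold fap. destruct (Rle_dec 0 x); [|lra]. destruct (Rle_dec x 1); [|lra].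
        unfold sN. fold N. rewrite (Int_part_eq _ k).
        * rewrite <- INR_IZR_INZ. reflexivity.
        * split.
          -- apply (Rmult_lt_reg_r (/N)); [apply Rinv_0_lt_compat; lra|].
             replace (N * x * / N) with x by (field; lra). unfold Rdiv in Hx. lra.
          -- apply (Rmult_lt_reg_r (/N)); [apply Rinv_0_lt_compat; lra|].
             replace (N * x * / N) with x by (field; lra). unfold Rdiv in Hx. lra.
      + apply (@ex_RInt_scal R_NormedModule g).
        apply (@ex_RInt_Chasles_2 R_CompleteNormedModule g 0); [lra|].
        apply (@ex_RInt_Chasles_1 R_CompleteNormedModule g _ _ 1); [lra|exact Hg]. }
  replace 1 with (N / N) by (field; lra).
  apply (Hk (S n)). lia.
Qed.

Lemma ex_RInt_vg (g : R -> R) : ex_RInt g 0 1 -> ex_RInt (fun v => v * g v) 0 1.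
Proof.
  intros Hg.
  destruct (@ex_RInt_ub R_NormedModule g 0 1 Hg) as [M HM].
  rewrite Rmin_left, Rmax_right in HM by lra.
  assert (HM' : forall t, 0 <= t <= 1 -> Rabs (g t) <= M) by (intros t Ht; exact (HM t Ht)).
  clear HM.
  assert (HM0 : 0 <= M) by (specialize (HM' 0 ltac:(lra)); eapply Rle_trans; [apply Rabs_pos|exact HM']).
  destruct (@filterlim_RInt nat R_CompleteNormedModule (fap g) 0 1 eventually _ (klim g) (fun n => RInt (fap g n) 0 1))
    as [If [_ HI]].
  - intros n. apply RInt_correct. apply ex_fap. exact Hg.
  - intros P [eps HP]. 
    destruct (archimed (M / eps)) as [Ha _].
    assert (Hpos : (0 <= up (M / eps))%Z).
    { apply le_IZR. assert (0 <= M / eps) by (apply Rdiv_le_0_compat; [lra| apply cond_pos]). lra. }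
    exists (Z.to_nat (up (M / eps))). intros n Hn. apply HP.
    intros t. unfold fap, klim.
    destruct (Rle_dec 0 t); [destruct (Rle_dec t 1)|].
    + change (Rabs (sN n t * g t - t * g t) < eps).
      assert (HN : 0 < INR (S n)) by (apply lt_0_INR; lia).
      assert (HnM : M / eps < INR (S n)).
      { rewrite S_INR. apply le_INR in Hn. rewrite INR_IZR_INZ, Z2Nat.id in Hn by lia. lra. }
      assert (HMe : M < INR (S n) * eps).
      { pose proof (cond_pos eps). apply (Rmult_lt_compat_r eps) in HnM; [|lra].
        unfold Rdiv in HnM. rewrite Rmult_assoc, Rinv_l in HnM by lra. lra. }
      set (N := INR (S n)) in *.
      destruct (base_Int_part (N * t)) as [B1 B2].
      assert (Hd : sN n t - t = (IZR (Int_part (N * t)) - N * t) * / N) by (unfold sN; fold N; field; lra).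
      rewrite <- Rmult_minus_distr_r, Rabs_mult, Hd, Rabs_mult, Rabs_left1 by lra.
      rewrite Rabs_right by (left; apply Rinv_0_lt_compat; lra).
      assert (Hg1 : Rabs (g t) <= M) by (apply HM'; lra).
      assert (Hi : 0 < / N) by (apply Rinv_0_lt_compat; lra).
      assert (HNi : N * / N = 1) by (field; lra).
      apply Rle_lt_trans with (/ N * M).
      * assert (Hd0 : 0 <= - (IZR (Int_part (N * t)) - N * t) <= 1) by lra.
        apply Rle_trans with (1 * / N * Rabs (g t)).
        -- apply Rmult_le_compat_r; [apply Rabs_pos|]. apply Rmult_le_compat_r; lra.
        -- rewrite Rmult_1_l. apply Rmult_le_compat_l; lra.
      * apply (Rmult_lt_reg_l N); [lra|]. rewrite <- Rmult_assoc, HNi. lra.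
    + apply ball_center.
    + apply ball_center.
  - exists If. apply (is_RInt_ext (klim g)); [|exact HI].
    rewrite Rmin_left, Rmax_right by lra. intros x Hx. unfold klim.
    destruct (Rle_dec 0 x); [|lra]. destruct (Rle_dec x 1); [|lra]. reflexivity.
Qed.

Lemma exsub (f : R -> R) a b u w : a <= u -> u <= w -> w <= b -> ex_RInt f a b -> ex_RInt f u w.
Proof.
  intros H1 H2 H3 H.
  apply (@ex_RInt_Chasles_2 R_CompleteNormedModule f a u w); [lra|].
  apply (@ex_RInt_Chasles_1 R_CompleteNormedModule f a w b); [lra|exact H].
Qed.

Lemma RC (f : R -> R) a b c : ex_RInt f a b -> ex_RInt f b c -> RInt f a b + RInt f b c = RInt f a c.
Proof. intros H1 H2. exact (@RInt_Chasles R_CompleteNormedModule f a b c H1 H2). Qed.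

Lemma exlin (g : R -> R) c a b : ex_RInt g a b -> ex_RInt (fun v => v * g v) a b ->
  ex_RInt (fun v => (v - c) * g v) a b.
Proof.
  intros H1 H2.
  apply (@ex_RInt_ext R_NormedModule (fun v => minus (v * g v) (scal c (g v)))).
  - intros x _. unfold minus, plus, opp, scal. simpl. unfold mult. simpl. ring.
  - apply (@ex_RInt_minus R_NormedModule); [exact H2|]. apply (@ex_RInt_scal R_NormedModule). exact H1.
Qed.

Lemma RIscal (g : R -> R) c a b : ex_RInt g a b -> RInt (fun v => c * g v) a b = c * RInt g a b.
Proof. intros H. exact (@RInt_scal R_CompleteNormedModule g a b c H). Qed.

Lemma RIconst c a b : RInt (fun _ => c) a b = (b - a) * c.
Proof. exact (@RInt_const R_CompleteNormedModule a b c). Qed.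

Lemma lc_min (g : R -> R) : (forall x, 0 < x < 1 -> 0 < g x) -> log_concave_on01 g ->
  forall x y z, 0 < x < 1 -> 0 < y < 1 -> x <= z <= y -> Rmin (g x) (g y) <= g z.
Proof.
  intros Hp Hlc x y z Hx Hy Hz.
  destruct (Req_dec x y) as [E|E].
  { subst. assert (z = y) by lra. subst. apply Rmin_l. }
  set (t := (y - z) / (y - x)).
  assert (Ht : 0 <= t <= 1).
  { unfold t. split.
    - apply Rdiv_le_0_compat; lra.
    - apply (Rmult_le_reg_r (y - x)); [lra|]. unfold Rdiv. rewrite Rmult_assoc, Rinv_l by lra. lra. }
  pose proof (Hlc x y t Hx Hy Ht) as L.
  replace (t * x + (1 - t) * y) with z in L by (unfold t; field; lra).
  assert (gx := Hp x Hx). assert (gy := Hp y Hy). assert (gz : 0 < g z) by (apply Hp; lra).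
  set (m := Rmin (g x) (g y)) in *.
  assert (Hm : 0 < m) by (apply Rmin_glb_lt; lra).
  assert (L1 : ln m <= ln (g x)) by (apply ln_le; [lra| apply Rmin_l]).
  assert (L2 : ln m <= ln (g y)) by (apply ln_le; [lra| apply Rmin_r]).
  destruct (Rle_lt_dec m (g z)) as [ok|bad]; [exact ok|].
  exfalso. pose proof (ln_increasing _ _ gz bad). nra.
Qed.

Lemma RIpt (f : R -> R) a : RInt f a a = 0.
Proof. exact (@RInt_point R_CompleteNormedModule a f). Qed.

Section Main.
Variable g : R -> R.
Hypothesis Hnn : forall x, 0 <= x <= 1 -> 0 <= g x.
Hypothesis Hp : forall x, 0 < x < 1 -> 0 < g x.
Hypothesis Hlc : log_concave_on01 g.
Hypothesis Hg : ex_RInt g 0 1.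

Lemma posint u w : 0 <= u -> u < w -> w <= 1 -> 0 < RInt g u w.
Proof.
  intros H1 H2 H3.
  set (x := (2*u + w)/3). set (y := (u + 2*w)/3).
  assert (ux : ex_RInt g u x) by (apply (exsub g 0 1); try eassumption; unfold x; lra).
  assert (xy : ex_RInt g x y) by (apply (exsub g 0 1); try eassumption; unfold x, y; lra).
  assert (yw : ex_RInt g y w) by (apply (exsub g 0 1); try eassumption; unfold y; lra).
  assert (uy : ex_RInt g u y) by (apply (exsub g 0 1); try eassumption; unfold y; lra).
  rewrite <- (RC g u y w uy yw), <- (RC g u x y ux xy).
  assert (A : 0 <= RInt g u x) by (apply RInt_ge_0; [unfold x; lra| exact ux| intros; apply Hnn; unfold x in *; lra]).
  assert (C : 0 <= RInt g y w) by (apply RInt_ge_0; [unfold y; lra| exact yw| intros; apply Hnn; unfold y in *; lra]).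
  assert (B : (y - x) * Rmin (g x) (g y) <= RInt g x y).
  { rewrite <- RIconst. apply RInt_le; [unfold x, y; lra| apply ex_RInt_const| exact xy|].
    intros z Hz. apply (lc_min g Hp Hlc); unfold x, y in *; lra. }
  assert (P : 0 < Rmin (g x) (g y)) by (apply Rmin_glb_lt; apply Hp; unfold x, y; lra).
  assert (0 < y - x) by (unfold x, y; lra).
  assert (0 < (y - x) * Rmin (g x) (g y)) by (apply Rmult_lt_0_compat; lra).
  lra.
Qed.

Hypothesis Hvg : ex_RInt (fun v => v * g v) 0 1.

Definition Fa (a : R) := RInt (fun v => (v - a) * g v) a 1.

Lemma exh c u w : 0 <= u -> u <= w -> w <= 1 -> ex_RInt (fun v => (v - c) * g v) u w.
Proof.
  intros. apply exlin; apply (exsub _ 0 1); try eassumption; auto.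
Qed.

Lemma Fdec a1 a2 : 0 <= a1 -> a1 < a2 -> a2 <= 1 -> Fa a2 < Fa a1.
Proof.
  intros H1 H2 H3. unfold Fa.
  set (m := (a1 + a2) / 2).
  set (h1 := fun v => (v - a1) * g v).
  rewrite <- (RC h1 a1 m 1) by (apply exh; unfold m; lra).
  rewrite <- (RC h1 m a2 1) by (apply exh; unfold m; lra).
  assert (A : 0 <= RInt h1 a1 m).
  { apply RInt_ge_0; [unfold m; lra| apply exh; unfold m; lra|].
    intros x Hx. unfold h1. apply Rmult_le_pos; [lra| apply Hnn; unfold m in *; lra]. }
  assert (B : (m - a1) * RInt g m a2 <= RInt h1 m a2).
  { rewrite <- RIscal by (apply (exsub _ 0 1); try eassumption; unfold m; lra).
    apply RInt_le; [unfold m; lra| |apply exh; unfold m; lra|].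
    - apply (@ex_RInt_scal R_NormedModule). apply (exsub _ 0 1); try eassumption; unfold m; lra.
    - intros x Hx. unfold h1. apply Rmult_le_compat_r; [apply Hnn; unfold m in *; lra| lra]. }
  assert (C : RInt (fun v => (v - a2) * g v) a2 1 <= RInt h1 a2 1).
  { apply RInt_le; [lra| apply exh; lra| apply exh; lra|].
    intros x Hx. unfold h1. apply Rmult_le_compat_r; [apply Hnn; lra| lra]. }
  assert (D : 0 < RInt g m a2) by (apply posint; unfold m; lra).
  assert (0 < m - a1) by (unfold m; lra).
  assert (0 < (m - a1) * RInt g m a2) by (apply Rmult_lt_0_compat; lra).
  lra.
Qed.

End Main.

Theorem corollary1 (g : R -> R) (a : R -> R) (ph : R) :
  outside_option_density g ->
  0 < mean g < 1 ->
  (forall s, 0 <= s < mean g -> solves_a g s (a s)) ->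
  solves_ph g ph ->
  exists sh, 0 < sh < mean g /\
    (forall s, 0 <= s < sh -> p_opt g ph a s = ph) /\
    (forall s, sh <= s < mean g -> p_opt g ph a s = 1 - a s) /\
    1 - a sh < ph.
Proof.
  intros [Hnn [Hp [Hg [H1 Hlc]]]] Hmean Ha [Hph [Hgq Hpeq]].
  assert (Hvg := ex_RInt_vg g Hg).
  assert (Hph1 : ph <> 1).
  { intros E. rewrite E in Hpeq. unfold cdf in Hpeq.
    replace (1 - 1) with 0 in Hpeq by ring. rewrite RIpt in Hpeq.
    unfold Rdiv in Hpeq. rewrite Rmult_0_l in Hpeq. lra. }
  assert (Hph0 : ph <> 0).
  { intros E. rewrite E in Hpeq, Hgq. unfold cdf in Hpeq.
    replace (1 - 0) with 1 in Hpeq, Hgq by ring. rewrite H1 in Hpeq.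
    assert (0 < 1 / g 1) by (apply Rdiv_lt_0_compat; lra). lra. }
  assert (Hphp : 0 < ph < 1).
  { destruct Hph as [A B]. split; [destruct A as [A|A]; [exact A| congruence]|destruct B as [B|B]; [exact B| congruence]]. }
  assert (Hq : 0 < 1 - ph < 1) by lra.
  assert (HGq : cdf g (1 - ph) = ph * g (1 - ph)) by (rewrite Hpeq at 2; field; lra).
  assert (HGq1 : cdf g (1 - ph) < 1).
  { unfold cdf.
    pose proof (RC g 0 (1 - ph) 1 ltac:(apply (exsub g 0 1); try eassumption; lra)
                                  ltac:(apply (exsub g 0 1); try eassumption; lra)) as E.
    rewrite H1 in E.
    assert (0 < RInt g (1 - ph) 1) by (apply posint; auto; lra). lra. }
  assert (HGq0 : 0 < cdf g (1 - ph)) by (rewrite HGq; apply Rmult_lt_0_compat; lra).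
  set (c := ph * cdf g (1 - ph)).
  assert (Hc : 0 < c < ph).
  { unfold c. split; [apply Rmult_lt_0_compat; lra|].
    assert (ph * cdf g (1 - ph) < ph * 1) by (apply Rmult_lt_compat_l; lra). lra. }
  set (ast := 1 - c).
  assert (Hast : 0 < ast < 1) by (unfold ast; lra).
  set (sh := Fa g ast).
  assert (F0 : Fa g 0 = mean g).
  { unfold Fa, mean. apply (@RInt_ext R_CompleteNormedModule). intros x _. simpl. ring. }
  assert (F1 : Fa g 1 = 0).
  { unfold Fa. apply RIpt. }
  assert (Hsh : 0 < sh < mean g).
  { unfold sh. split.
    - rewrite <- F1. apply Fdec; auto; lra.
    - rewrite <- F0. apply Fdec; auto; lra. }
  assert (Hmono : forall x y, 0 <= x <= 1 -> 0 <= y <= 1 -> x < y -> Fa g y < Fa g x).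
  { intros x y Hx Hy Hxy. apply Fdec; auto; lra. }
  assert (HA : forall s, 0 <= s < mean g -> 0 <= a s <= 1 /\ Fa g (a s) = s).
  { intros s Hs. destruct (Ha s Hs) as [X Y]. split; [exact X| exact Y]. }
  exists sh. split; [exact Hsh|]. split; [|split].
  - intros s Hs. destruct (HA s ltac:(lra)) as [X Y].
    unfold p_opt. fold c. destruct (Rle_dec c (1 - a s)) as [r|r]; [exfalso|reflexivity].
    destruct (Rtotal_order (a s) ast) as [L|[L|L]].
    + pose proof (Hmono (a s) ast X ltac:(lra) L). fold sh in H. lra.
    + rewrite L in Y. fold sh in Y. lra.
    + unfold ast in L. lra.
  - intros s Hs. destruct (HA s ltac:(lra)) as [X Y].
    unfold p_opt. fold c. destruct (Rle_dec c (1 - a s)) as [r|r]; [reflexivity|exfalso].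
    assert (L : ast < a s) by (unfold ast; lra).
    pose proof (Hmono ast (a s) ltac:(lra) X L). fold sh in H. lra.
  - destruct (HA sh ltac:(lra)) as [X Y].
    destruct (Rtotal_order (a sh) ast) as [L|[L|L]].
    + pose proof (Hmono (a sh) ast X ltac:(lra) L). fold sh in H. lra.
    + rewrite L. unfold ast. lra.
    + pose proof (Hmono ast (a sh) ltac:(lra) X L). fold sh in H. lra.
Qed.
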